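(* Consider the Histogram Partitioning algorithm (described in the context) run on $N$ distinct keys distributed over $p$ processors. If at the start of the $j$-th round exactly $k$ splitters are unachieved, then the sampled set satisfies $|\gamma_j| \le \frac{3kN}{p}$.
   Context: Setting: $N$ distinct keys from a totally ordered set (only comparisons are used) are distributed across $p$ processors, $N/p$ keys per processor. $R(x)$ denotes the global rank of key $x$. For $\ell\in\{1,\dots,p-1\}$, the target range of splitter $\ell$ is the rank range $[\frac{N\ell}{p},\frac{N\ell}{p}+\frac{N}{p}]$; splitter $\ell$ is achieved in a round if some key whose rank lies in this range is sampled in that round (and it stays achieved afterwards). Histogram Partitioning proceeds in rounds $j=1,2,\dots$. In round $j$ there is a set $\gamma_j$ of keys from which samples are drawn ($\gamma_1$ is the whole input): each key of $\gamma_j$ is sampled independently with some probability $s_j$, the global ranks (histogram) of all sampled keys are computed and made known to all processors. For every splitter $\ell$ not yet achieved, the algorithm maintains bounds: $L_j(\ell)$ is the largest key sampled before round $j$ whose rank is below $\frac{N\ell}{p}$ (or the smallest key if none), and $U_j(\ell)$ is the smallest key sampled before round $j$ whose rank is above $\frac{N\ell}{p}+\frac{N}{p}$ (or the largest key if none). Then $\gamma_j$ is the union, over all splitters $\ell$ unachieved before round $j$, of the sets of keys lying between $L_j(\ell)$ and $U_j(\ell)$. *)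

(* Defs.v *)
From mathcomp Require Import all_boot all_order.
Set Implicit Arguments. Unset Strict Implicit. Unset Printing Implicit Defensive.
Import Order.TTheory.

(* The input: a nonempty finite totally ordered type T whose elements are
   exactly the N = #|T| distinct input keys.  \bot / \top are the smallest /
   largest keys.  Parameters: p processors, n = N/p keys per processor.
   Rounds are numbered 1, 2, ...; S i : {set T} is the set of keys sampled
   in round i. *)

Section HistPart.
Variables (d : Order.disp_t) (T : finTBOrderType d).

Definition rank (x : T) : nat := #|[set y : T | (y < x)%O]|.

Definition in_target (n l r : nat) : bool := (n * l <= r) && (r <= n * l + n).

Definition sampled_before (S : nat -> {set T}) (j : nat) : {set T} :=
  \bigcup_(1 <= i < j) S i.

Definition achieved (S : nat -> {set T}) (n j l : nat) : bool :=
  [exists x in sampled_before S j, in_target n l (rank x)].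

Definition Lbound (S : nat -> {set T}) (n j l : nat) : T :=
  \big[(@Order.max _ T)/(\bot%O : T)]_(y in sampled_before S j | rank y < n * l) y.

Definition Ubound (S : nat -> {set T}) (n j l : nat) : T :=
  \big[(@Order.min _ T)/(\top%O : T)]_(y in sampled_before S j | n * l + n < rank y) y.

(* splitters are l = 1, ..., p-1 *)
Definition unachieved (S : nat -> {set T}) (p n j : nat) : {set 'I_p} :=
  [set l : 'I_p | (0 < val l) && ~~ achieved S n j l].

Definition gamma (S : nat -> {set T}) (p n j : nat) : {set T} :=
  if j <= 1 then setT
  else [set x : T | [exists l in unachieved S p n j,
          (Lbound S n j l < x)%O && (x < Ubound S n j l)%O]].
End HistPart.

(* Main.v *)
Require Import Defs.
From mathcomp Require Import all_boot all_order.
From mathcomp Require Import zify.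
Import Order.TTheory.

Section Aux.
Variables (d : Order.disp_t) (T : finTBOrderType d).

Lemma card_bigcup_le (I : finType) (P : pred I) (F : I -> {set T}) :
  #|\bigcup_(i | P i) F i| <= \sum_(i | P i) #|F i|.
Proof.
elim/big_rec2: _ => [|i m U _ le]; first by rewrite cards0.
by rewrite (leq_trans (leq_card_setU _ _).1) ?leq_add2l.
Qed.

Lemma rank_lt {x y : T} : (x < y)%O -> rank x < rank y.
Proof.
move=> xy; apply: proper_card; apply/properP; split.
  by apply/subsetP=> z; rewrite !inE => zx; apply: lt_trans zx xy.
by exists x; rewrite !inE ?ltxx.
Qed.

Lemma rank_inj : injective (@rank d T).
Proof.
move=> x y e; case: (ltgtP x y) => // h.
  by move: (rank_lt h); rewrite e ltnn.
by move: (rank_lt h); rewrite e ltnn.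
Qed.

Lemma rank_ltT (x : T) : rank x < #|T|.
Proof.
have -> : #|T| = (#|[set~ x]|).+1 by rewrite cardsC1 prednK //; apply/card_gt0P; exists x.
rewrite ltnS; apply: subset_leq_card; apply/subsetP=> z; rewrite !inE.
by move=> zx; apply/eqP=> e; move: zx; rewrite e ltxx.
Qed.

Lemma window_card (a m : nat) : #|[set x : T | a <= rank x < a + m]| <= m.
Proof.
rewrite cardE.
have -> : m = size (iota a m) by rewrite size_iota.
rewrite -(size_map (@rank d T)); apply: uniq_leq_size.
  by rewrite (map_inj_uniq rank_inj) enum_uniq.
move=> r /mapP[x]; rewrite mem_enum inE => hx ->.
by rewrite size_iota in hx; rewrite mem_iota.
Qed.

End Aux.
Arguments rank_lt {d T x y}.
Arguments rank_ltT {d T}.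
Arguments card_bigcup_le {d T I}.

Theorem lemma2p2 (d : Order.disp_t) (T : finTBOrderType d) (p n : nat)
    (S : nat -> {set T}) (j k : nat) :
  1 < p ->
  #|T| = n * p ->
  (forall i, 1 <= i < j -> S i \subset gamma S p n i) ->
  1 <= j ->
  #|unachieved S p n j| = k ->
  #|gamma S p n j| <= 3 * k * n.
Proof.
move=> p1 cT _ j1 ck.
have n0 : 0 < n.
  have : 0 < #|T| by apply/card_gt0P; exists (\bot%O : T).
  by rewrite cT; case: n {cT ck} => //.
case: (leqP j 1) => jle.
  have jj : j = 1 by apply/eqP; rewrite eqn_leq jle j1.
  rewrite /gamma jle cardsT cT.
  move: ck; subst j.
  have sb0 : sampled_before S 1 = set0 by rewrite /sampled_before big_geq.
  case: p p1 cT => [//|p'] p1 cT.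
  have -> : unachieved S p'.+1 n 1 = [set~ ord0].
    apply/setP=> l; rewrite !inE /achieved sb0 lt0n.
    have -> : [exists x in (set0 : {set T}), in_target n l (rank x)] = false.
      by apply: negbTE; apply/existsP=> -[x]; rewrite inE.
    by rewrite andbT; congr (~~ _); apply/eqP/eqP=> [->|/(f_equal val)].
  rewrite cardsC1 card_ord /= => <-; nia.
set U := unachieved S p n j.
pose W (l : 'I_p) := [set x : T | n * l - n <= rank x < n * l - n + 3 * n].
have sub : gamma S p n j \subset \bigcup_(l in U) W l.
  apply/subsetP=> x; rewrite /gamma leqNgt jle /= inE => /existsP[l /andP[lU /andP[Lx xU]]].
  move: (lU); rewrite inE => /andP[l0 nach].
  have rT := rank_ltT x; rewrite cT in rT.
  set r := rank x in rT *.
  have hdiv := divn_eq r n; have hmod := ltn_pmod r n0.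
  have achl : forall y, y \in sampled_before S j -> in_target n l (rank y) -> False.
    move=> y ysb tg; move/negP: nach; apply; apply/existsP; exists y; by rewrite ysb.
  case: (ltnP r (n * l - n)) => h1.
    have l'p : r %/ n + 1 < p by have := ltn_ord l; nia.
    apply/bigcupP; exists (Ordinal l'p).
      rewrite inE /= addn1 /=; apply/negP => /existsP[y /andP[ysb /andP[t1 t2]]].
      case: (ltnP (rank y) (n * l)) => h2.
        have : (y <= Lbound S n j l)%O.
          by apply: (le_bigmax_cond _ (P := fun y => (y \in sampled_before S j) && (rank y < n * l))); rewrite ysb h2.
        move=> yL; have := rank_lt (le_lt_trans yL Lx); rewrite -/r; nia.
      apply: (achl y ysb); rewrite /in_target; apply/andP; split=> //; nia.
    rewrite inE /= -/r; apply/andP; split; nia.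
  case: (ltnP r (n * l - n + 3 * n)) => h3.
    apply/bigcupP; exists l => //; rewrite inE -/r h1 h3 //.
  have l'p : r %/ n - 1 < p by nia.
  apply/bigcupP; exists (Ordinal l'p).
    rewrite inE /=; apply/andP; split; first nia.
    apply/negP => /existsP[y /andP[ysb /andP[t1 t2]]].
    case: (ltnP (n * l + n) (rank y)) => h2.
      have : (Ubound S n j l <= y)%O.
        by apply: (bigmin_le_cond _ (P := fun y => (y \in sampled_before S j) && (n * l + n < rank y))); rewrite ysb h2.
      move=> Uy; have := rank_lt (lt_le_trans xU Uy); rewrite -/r; nia.
    apply: (achl y ysb); rewrite /in_target; apply/andP; split=> //; nia.
  rewrite inE /= -/r; apply/andP; split; nia.
apply: (leq_trans (subset_leq_card sub)).
apply: (leq_trans (card_bigcup_le _ _)).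
apply: (@leq_trans (\sum_(l in U) 3 * n)).
  apply: leq_sum => l _; apply: window_card.
rewrite sum_nat_const ck; nia.
Qed.
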